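(* Let $\lambda$ be a nonzero real number and let $n,r$ be positive integers. Then $$\sum_{k=1}^{n}(-1)^{k}H_{k,\lambda}^{(r)}\,k!\,S_{2,\lambda}(n,k)=(-1)^{n}\langle r\rangle_{n-1,\lambda}\,n.$$ In particular, for $r=1$ (provided $\langle 1\rangle_{n-1,\lambda}\neq 0$), $$\frac{1}{\langle 1\rangle_{n-1,\lambda}}\sum_{k=1}^{n}(-1)^{n-k}H_{k,\lambda}\,k!\,S_{2,\lambda}(n,k)=n.$$
   Context: For real $x$ and integer $k\ge0$: $(x)_{0,\lambda}=1$, $(x)_{k,\lambda}=x(x-\lambda)\cdots(x-(k-1)\lambda)$; $\langle x\rangle_{0,\lambda}=1$, $\langle x\rangle_{k,\lambda}=x(x+\lambda)\cdots(x+(k-1)\lambda)$; $(x)_0=1$, $(x)_k=x(x-1)\cdots(x-k+1)$. The degenerate Stirling numbers of the second kind $S_{2,\lambda}(n,k)$ are defined by $(x)_{n,\lambda}=\sum_{k=0}^{n}S_{2,\lambda}(n,k)(x)_{k}$ for $n\ge0$; equivalently $\frac{1}{k!}(e_\lambda(t)-1)^k=\sum_{n\ge k}S_{2,\lambda}(n,k)\frac{t^n}{n!}$, where $e_\lambda(t)=\sum_{k\ge0}(1)_{k,\lambda}t^k/k!=(1+\lambda t)^{1/\lambda}$. The degenerate harmonic numbers are $H_{0,\lambda}=0$, $H_{n,\lambda}=\sum_{k=1}^{n}\frac{1}{\lambda}\binom{\lambda}{k}(-1)^{k-1}$ for $n\ge1$; the degenerate hyperharmonic numbers are $H_{n,\lambda}^{(1)}=H_{n,\lambda}$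 and $H_{n,\lambda}^{(r)}=\sum_{k=1}^{n}H_{k,\lambda}^{(r-1)}$ for $r\ge2$. *)

(* Defs.v *)
From HB Require Import structures.
From mathcomp Require Import all_boot all_order all_algebra.
Set Implicit Arguments. Unset Strict Implicit. Unset Printing Implicit Defensive.
Import Order.TTheory GRing.Theory Num.Theory.
Local Open Scope ring_scope.

Section DegDefs.
Variable R : realFieldType.

Definition dfall (x lam : R) (k : nat) : R := \prod_(i < k) (x - i%:R * lam).
Definition drise (x lam : R) (k : nat) : R := \prod_(i < k) (x + i%:R * lam).
Definition ffall (x : R) (k : nat) : R := \prod_(i < k) (x - i%:R).

(* e_lambda(t) - 1, truncated at degree n: sum_{1<=j<=n} (1)_{j,lam} t^j / j! *)
Definition elam_m1_trunc (lam : R) (n : nat) : {poly R} :=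
  \poly_(j < n.+1) (if j == 0%N then 0 else dfall 1 lam j / (j`!)%:R).

(* degenerate Stirling numbers of the second kind, via the exponential
   generating function  (1/k!) (e_lam(t) - 1)^k = sum_n S2(n,k) t^n/n!
   (the truncation at degree n does not affect the coefficient of t^n). *)
Definition S2lam (lam : R) (n k : nat) : R :=
  (n`!)%:R / (k`!)%:R * ((elam_m1_trunc lam n) ^+ k)`_n.

Definition gbinom (x : R) (k : nat) : R := ffall x k / (k`!)%:R.

Definition Hlam (lam : R) (n : nat) : R :=
  \sum_(1 <= k < n.+1) lam^-1 * gbinom lam k * (-1) ^+ k.-1.

(* degenerate hyperharmonic numbers H^{(r)}_{n,lam}, r >= 1
   (the value at r = 0 is a junk value equal to H_{n,lam}) *)
Fixpoint Hhyp (lam : R) (r n : nat) : R :=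
  match r with
  | 0%N => Hlam lam n
  | r'.+1 => if r' is 0%N then Hlam lam n
             else \sum_(1 <= k < n.+1) Hhyp lam r' k
  end.

End DegDefs.

(* Main.v *)
Set Warnings "-all".
Require Import Defs.
From HB Require Import structures.
From mathcomp Require Import all_boot all_order all_algebra ring lra zify.
Import Order.TTheory GRing.Theory Num.Theory.
Local Open Scope ring_scope.

Section Aux.
Variable R : realFieldType.
Implicit Types (x y l : R).

Lemma natn0 n : (n.+1)%:R != 0 :> R.
Proof. by rewrite pnatr_eq0. Qed.

Lemma factn0 n : (n`!)%:R != 0 :> R.
Proof. by rewrite pnatr_eq0 -lt0n fact_gt0. Qed.

Lemma dfallS x l k : dfall x l k.+1 = dfall x l k * (x - k%:R * l).
Proof. by rewrite /dfall big_ord_recr. Qed.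

Lemma driseS x l k : drise x l k.+1 = drise x l k * (x + k%:R * l).
Proof. by rewrite /drise big_ord_recr. Qed.

Lemma ffallS x k : ffall x k.+1 = ffall x k * (x - k%:R).
Proof. by rewrite /ffall big_ord_recr. Qed.

Lemma dfallSl x l k : dfall x l k.+1 = x * dfall (x - l) l k.
Proof.
rewrite /dfall big_ord_recl /= mul0r subr0; congr (_ * _).
apply: eq_bigr => i _; rewrite /= -natr1; ring.
Qed.

Lemma driseSl x l k : drise x l k.+1 = x * drise (x + l) l k.
Proof.
rewrite /drise big_ord_recl /= mul0r addr0; congr (_ * _).
apply: eq_bigr => i _; rewrite /= -natr1; ring.
Qed.

Lemma ffall_dfall x k : ffall x k = dfall x 1 k.
Proof. by apply: eq_bigr => i _; rewrite mulr1. Qed.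

Lemma dfallN y l k : dfall (- y) l k = (-1) ^+ k * drise y l k.
Proof.
elim: k => [|k IH]; first by rewrite /dfall /drise !big_ord0 expr0 mulr1.
rewrite dfallS driseS IH exprS; ring.
Qed.


Lemma coef_pow_eq (p q : {poly R}) m : (forall i, (i <= m)%N -> p`_i = q`_i) ->
  forall k i, (i <= m)%N -> (p ^+ k)`_i = (q ^+ k)`_i.
Proof.
move=> H; elim=> [|k IH] i Hi; first by rewrite !expr0.
rewrite !exprS !coefM; apply: eq_bigr => j _; rewrite H ?IH //.
  by apply: leq_trans (leq_subr _ _) Hi.
by apply: leq_trans Hi; rewrite -ltnS.
Qed.

Lemma coef_pow_lt (p : {poly R}) : p`_0 = 0 -> forall k i, (i < k)%N -> (p ^+ k)`_i = 0.
Proof.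
move=> H0; elim=> [|k IH] i Hi //.
rewrite exprS coefM big1 // => [[[|j] Hj]] _ /=; first by rewrite H0 mul0r.
rewrite IH ?mulr0 //; lia.
Qed.

Lemma coef_mul_eq (p q r : {poly R}) m : (forall i, (i <= m)%N -> p`_i = q`_i) ->
  (p * r)`_m = (q * r)`_m.
Proof.
move=> H; rewrite !coefM; apply: eq_bigr => j _; rewrite H //.
by rewrite -ltnS.
Qed.

Variable lam : R.
Notation E N := (elam_m1_trunc lam N).

Lemma coefE N j : (E N)`_j =
  if (j < N.+1)%N then (if j == 0%N then 0 else dfall 1 lam j / (j`!)%:R) else 0.
Proof. by rewrite coef_poly. Qed.

Lemma E0 N : (E N)`_0 = 0.
Proof. by rewrite coefE. Qed.

Lemma KE N j : (j < N)%N -> ((1 + lam *: 'X) * (E N)^`())`_j = (1 + E N)`_j.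
Proof.
move=> HjN.
rewrite mulrDl mul1r -scalerAl coefD coefZ coefXM !coef_deriv coefD coef1 !coefE.
have -> : (j.+1 < N.+1)%N by [].
case: j HjN => [|j] HjN.
  by rewrite /= /dfall big_ord1 mul0r subr0 mulr1n mulr0 !addr0 divr1.
have -> : (j.+1 < N.+1)%N by lia.
rewrite [j.+1.-1]/=.
have -> : (j.+1 == 0)%N = false by [].
have -> : (j.+2 == 0)%N = false by [].
rewrite add0r dfallS (factS j.+1) (natrM _ j.+2) -[_ *+ j.+2]mulr_natr -[_ *+ j.+1]mulr_natr.
have := factn0 j.+1; have := natn0 j.+1.
set F := ((j.+1)`!)%:R; set M := (j.+2)%:R.
move=> h1 h2; clearbody F M; field.
by rewrite h1 h2.
Qed.

Lemma crec N m k : (m < N)%N ->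
  ((E N)^+k.+1)`_m.+1 *+ m.+1 + lam * (((E N)^+k.+1)`_m *+ m)
  = (((E N)^+k)`_m + ((E N)^+k.+1)`_m) *+ k.+1.
Proof.
move=> HmN.
have H1 : ((1 + lam *: 'X) * ((E N)^+k.+1)^`())`_m =
   ((E N)^+k.+1)`_m.+1 *+ m.+1 + lam * (((E N)^+k.+1)`_m *+ m).
  rewrite mulrDl mul1r -scalerAl coefD coefZ coefXM !coef_deriv.
  by case: m HmN => [|m] _ //=; rewrite mulr0n.
rewrite -H1 deriv_exp [k.+1.-1]/= mulrnAr coefMn mulrA.
rewrite (@coef_mul_eq _ (1 + E N)); last by move=> i Hi; apply: KE; lia.
by rewrite mulrDl mul1r -exprS coefD.
Qed.

Definition Sp N m k := (m`!)%:R / (k`!)%:R * ((E N)^+k)`_m.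

Lemma Srec N m k : (m < N)%N ->
  Sp N m.+1 k.+1 = Sp N m k + (k.+1%:R - lam * m%:R) * Sp N m k.+1.
Proof.
move=> HmN; have := @crec N m k HmN; rewrite /Sp.
set a := ((E N) ^+ k.+1)`_m.+1; set b := ((E N) ^+ k)`_m; set c := ((E N) ^+ k.+1)`_m.
rewrite -(mulr_natr a) -(mulr_natr c) -(mulr_natr (b + c)).
rewrite (factS m) (factS k) (natrM _ m.+1) (natrM _ k.+1).
have := factn0 m; have := factn0 k; have := natn0 m; have := natn0 k.
set Fm := (m`!)%:R; set Fk := (k`!)%:R; set M := m.+1%:R; set K := k.+1%:R.
set m' := m%:R.
move=> hK hM hk hm h; clearbody a b c Fm Fk M K m'.
have ha : a = ((b + c) * K - lam * (c * m')) / M.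
  by rewrite -h; field.
rewrite ha; field.
by rewrite hK hM hk.
Qed.

Lemma Sp_m0 N m : Sp N m.+1 0 = 0.
Proof. by rewrite /Sp expr0 coef1 /= mulr0. Qed.

Lemma Sp_big N m : Sp N m m.+1 = 0.
Proof. by rewrite /Sp (@coef_pow_lt _ (E0 N)) ?mulr0. Qed.

Lemma Ssum N x m : (m <= N)%N ->
  \sum_(0 <= k < m.+1) Sp N m k * ffall x k = dfall x lam m.
Proof.
elim: m => [|m IH] HmN.
  rewrite big_nat1 /Sp /dfall /ffall !big_ord0 expr0 coef1 /=.
  by rewrite divff ?factn0 // !mulr1.
rewrite big_nat_recl // Sp_m0 mul0r add0r.
pose g k := (k%:R - lam * m%:R) * Sp N m k * ffall x k.
transitivity (\sum_(0 <= k < m.+1) (Sp N m k * ffall x k * (x - k%:R) + g k.+1)).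
  apply: eq_big_nat => k _; rewrite Srec; last by lia.
  by rewrite mulrDl {1}ffallS /g; ring.
rewrite big_split /=.
have Hg : \sum_(0 <= k < m.+1) g k.+1 = \sum_(0 <= k < m.+1) g k.
  have g0 : g 0%N = 0.
    have G0 : forall m', (0%:R - lam * m'%:R) * Sp N m' 0 = 0.
      by case=> [|m']; rewrite ?Sp_m0 ?mulr0 // subrr mul0r.
    by rewrite /g G0 mul0r.
  have gm : g m.+1 = 0 by rewrite /g Sp_big mulr0 mul0r.
  by rewrite -[LHS]add0r -{1}g0 -big_nat_recl // big_nat_recr //= gm addr0.
rewrite Hg -big_split /=.
rewrite (eq_bigr (fun k => Sp N m k * ffall x k * (x - lam * m%:R))); last first.
  by move=> k _; rewrite /g; ring.
rewrite -mulr_suml IH; last by lia.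
by rewrite dfallS; ring.
Qed.

Definition q x k := drise x 1 k / (k`!)%:R.

Lemma q0 x : q x 0 = 1.
Proof. by rewrite /q /drise big_ord0 /= mulr1n divr1. Qed.

Lemma qS x k : q x k.+1 = q x k * (x + k%:R) / k.+1%:R.
Proof.
rewrite /q driseS mulr1 (factS k) (natrM _ k.+1).
have := factn0 k; have := natn0 k; set F := (k`!)%:R; set K := k.+1%:R.
move=> h1 h2; clearbody F K; field; by rewrite h1 h2.
Qed.

Lemma qpascal x k : q (x + 1) k.+1 = q (x + 1) k + q x k.+1.
Proof.
rewrite /q (driseS (x + 1)) (driseSl x) (factS k) (natrM _ k.+1) mulr1 -natr1.
have := factn0 k; have := natn0 k; rewrite -natr1.
set F := (k`!)%:R; set K := k%:R; set D := drise (x + 1) 1 k.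
move=> h1 h2; clearbody F K D; field; by rewrite h1 h2.
Qed.

Lemma sum_q x k : \sum_(1 <= j < k.+1) q x j = q (x + 1) k - 1.
Proof.
elim: k => [|k IH]; first by rewrite big_geq // q0 subrr.
rewrite big_nat_recr // IH qpascal /=; ring.
Qed.

Lemma drise11 k : drise 1 1 k = (k`!)%:R :> R.
Proof.
elim: k => [|k IH]; first by rewrite /drise big_ord0.
by rewrite driseS IH mulr1 addrC natr1 (factS k) natrM mulrC.
Qed.

Lemma q1 k : q 1 k = 1.
Proof. by rewrite /q drise11 divff // factn0. Qed.

Hypothesis lam0 : lam != 0.

Lemma Hlam_S k : Hlam lam k.+1 = Hlam lam k + lam^-1 * gbinom lam k.+1 * (-1)^+k.
Proof. by rewrite /Hlam big_nat_recr. Qed.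

Lemma gb k : gbinom lam k.+1 * (-1)^+k = lam * q (1 - lam) k / k.+1%:R.
Proof.
rewrite /gbinom ffall_dfall dfallSl -(opprB 1 lam) dfallN /q (factS k) (natrM _ k.+1).
have := factn0 k; have := natn0 k; set F := (k`!)%:R; set K := k.+1%:R.
set s := (-1)^+k; set D := drise (1 - lam) 1 k.
have ss : s * s = 1 by rewrite /s -exprMn mulrNN mulr1 expr1n.
move=> h1 h2; clearbody F K D s.
have -> : lam * (s * D) / (K * F) * s = lam * D * (s * s) / (K * F) by field; rewrite h1 h2.
rewrite ss mulr1; field; by rewrite h1 h2.
Qed.

Lemma Hlam_closed k : Hlam lam k = lam^-1 * (q 1 k - q (1 - lam) k).
Proof.
elim: k => [|k IH]; first by rewrite /Hlam big_geq // !q0 subrr mulr0.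
rewrite Hlam_S IH -mulrA gb !q1 qS -natr1.
have := natn0 k; rewrite -natr1.
set K := k%:R; set Q := q (1 - lam) k.
move=> h1; clearbody K Q; field; by rewrite h1 lam0.
Qed.

Lemma Hhyp_closed r k :
  Hhyp lam r.+1 k = lam^-1 * (q (r.+1%:R) k - q (r.+1%:R - lam) k).
Proof.
elim: r k => [|r IH] k.
  have -> : Hhyp lam 1 k = Hlam lam k by [].
  by rewrite Hlam_closed mulr1n.
have -> : Hhyp lam r.+2 k = \sum_(1 <= j < k.+1) Hhyp lam r.+1 j by [].
under eq_bigr do rewrite IH.
rewrite -mulr_sumr sumrB !sum_q natr1.
have -> : r.+1%:R - lam + 1 = r.+2%:R - lam :> R by rewrite -(natr1 r.+1); ring.
congr (_ * _); ring.
Qed.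

Lemma Hterm r k : (-1)^+k * Hhyp lam r.+1 k * (k`!)%:R
  = lam^-1 * (ffall (- r.+1%:R) k - ffall (lam - r.+1%:R) k).
Proof.
rewrite Hhyp_closed /q !ffall_dfall -(opprB (r.+1%:R) lam) !dfallN.
have := factn0 k; set F := (k`!)%:R; move=> h1; clearbody F.
field; by rewrite h1 lam0.
Qed.

Lemma main1 n r : 
  \sum_(1 <= k < n.+2) (-1) ^+ k * Hhyp lam r.+1 k * (k`!)%:R * S2lam lam n.+1 k
     = (-1) ^+ n.+1 * drise r.+1%:R lam n * n.+1%:R.
Proof.
set r' := r.+1%:R.
pose G k := lam^-1 * (Sp n.+1 n.+1 k * ffall (- r') k - Sp n.+1 n.+1 k * ffall (lam - r') k).
transitivity (\sum_(1 <= k < n.+2) G k).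
  apply: eq_big_nat => k _; rewrite Hterm /G /S2lam -/(Sp _ _ _); ring.
have G0 : G 0%N = 0 by rewrite /G /ffall !big_ord0 subrr mulr0.
rewrite -[LHS]add0r -{1}G0 -big_ltn // /G -mulr_sumr sumrB !Ssum //.
rewrite dfallN driseS dfallSl.
have -> : lam - r' - lam = - r' by ring.
rewrite dfallN exprS -natr1; field; by rewrite lam0.
Qed.

End Aux.

Theorem theorem2 (R : realFieldType) (lam : R) (n r : nat) :
  lam != 0 -> (0 < n)%N -> (0 < r)%N ->
  (\sum_(1 <= k < n.+1) (-1) ^+ k * Hhyp lam r k * (k`!)%:R * S2lam lam n k
     = (-1) ^+ n * drise r%:R lam n.-1 * n%:R)
  /\
  (drise 1 lam n.-1 != 0 ->
     (drise 1 lam n.-1)^-1 *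
       \sum_(1 <= k < n.+1) (-1) ^+ (n - k) * Hlam lam k * (k`!)%:R * S2lam lam n k
     = n%:R).
Proof.
move=> hl; case: n => // n _; case: r => // r _.
split; first exact: main1.
move=> hd.
have sg : forall k, (k <= n.+1)%N -> (-1) ^+ (n.+1 - k) = (-1) ^+ n.+1 * (-1) ^+ k :> R.
  move=> k hk; rewrite -{2}(subnK hk) exprD -mulrA -exprMn mulrNN mulr1 expr1n mulr1 //.
rewrite (eq_big_nat _ _ (F2 := fun k => (-1) ^+ n.+1 *
    ((-1) ^+ k * Hhyp lam 1 k * (k`!)%:R * S2lam lam n.+1 k))); last first.
  move=> k /andP[_ hk]; rewrite sg; last by lia.
  by rewrite /=; ring.
rewrite -mulr_sumr main1 // mulr1n [n.+1.-1]/= mulrA mulrA.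
have -> : (-1) ^+ n.+1 * (-1) ^+ n.+1 = 1 :> R by rewrite -exprMn mulrNN mulr1 expr1n.
by rewrite mul1r mulKf.
Qed.
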